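(* Let $N$ be a natural number, $P=\{a\subseteq N: |a|\geq 2\}$, and let $\|\cdot\|_3$ be the graph coloring norm on subsets of $P$ (defined in the context). Let $n$ be a natural number and $A\subseteq P$. If $A$ can be split by $2^n$ sets, then $\|A\|_3\leq n$.
   Context: $N=\{0,\ldots,N-1\}$. For $A\subseteq P$ and $z\subseteq N$ let $A\restriction z=\{a\in A: a\subseteq z\}$. The relation ''$\|A\|_3\geq m$'' is defined recursively: $\|A\|_3\geq 0$ always; $\|A\|_3\geq 1$ iff $A\neq\emptyset$; for $m\geq 1$, $\|A\|_3\geq m+1$ iff for every $z\subseteq N$ either $\|A\restriction z\|_3\geq m$ or $\|A\restriction(N\setminus z)\|_3\geq m$. Then $\|A\|_3$ is the largest $m$ with $\|A\|_3\geq m$. $A$ is split by sets $V_0,\ldots,V_{c-1}$ (pairwise disjoint, possibly empty, with union $N$) if $A\restriction V_j=\emptyset$ for every $j<c$; $A$ can be split by $c$ sets if such a partition of $N$ into $c$ sets exists. *)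

(* Defs.v *)
(* N = {0,...,N-1} is 'I_N; subsets of N are {set 'I_N}. *)
From mathcomp Require Import all_boot all_order.
Set Implicit Arguments. Unset Strict Implicit. Unset Printing Implicit Defensive.

Definition Pset (N : nat) : {set {set 'I_N}} := [set a : {set 'I_N} | 2 <= #|a|].

Definition restr (N : nat) (A : {set {set 'I_N}}) (z : {set 'I_N}) : {set {set 'I_N}} :=
  [set a in A | a \subset z].

(* norm3_ge A m  <=>  ||A||_3 >= m, by the recursive definition. *)
Fixpoint norm3_ge (N : nat) (A : {set {set 'I_N}}) (m : nat) {struct m} : bool :=
  match m with
  | 0 => true
  | 1 => A != set0
  | (k.+1 as m').+1 =>
      [forall z : {set 'I_N}, norm3_ge (restr A z) m' || norm3_ge (restr A (~: z)) m']
  end.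

Definition norm3_le (N : nat) (A : {set {set 'I_N}}) (n : nat) : Prop :=
  forall m, norm3_ge A m -> m <= n.

Definition split_by (N c : nat) (A : {set {set 'I_N}}) (V : 'I_c -> {set 'I_N}) : Prop :=
  (forall i j : 'I_c, i != j -> [disjoint V i & V j]) /\
  (\bigcup_(j < c) V j = setT) /\
  (forall j : 'I_c, restr A (V j) = set0).

Definition can_be_split (N : nat) (A : {set {set 'I_N}}) (c : nat) : Prop :=
  exists V : 'I_c -> {set 'I_N}, split_by A V.

(* Main.v *)
Require Import Defs.
From mathcomp Require Import all_boot all_order.

Lemma restr0 (N : nat) (z : {set 'I_N}) : restr set0 z = set0.
Proof. by apply/setP=> a; rewrite /restr !inE. Qed.

Lemma norm3_set0 (N : nat) m : norm3_ge (set0 : {set {set 'I_N}}) m.+1 = false.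
Proof.
elim: m => [|m IH] //=; first by rewrite eqxx.
apply/negbTE/negP=> /forallP /(_ set0); rewrite !restr0 orbb; move: IH; case: m => //= [|m] -> //; by rewrite eqxx.
Qed.

Lemma key (N : nat) n : forall (A : {set {set 'I_N}}) (V : nat -> {set 'I_N}),
  (forall x, exists2 j, j < 2 ^ n & x \in V j) ->
  (forall j a, j < 2 ^ n -> a \in A -> a \subset V j -> False) ->
  forall m, n < m -> ~~ norm3_ge A m.
Proof.
elim: n => [|n IH] A V cov emp m.
  have A0 : A = set0.
    apply/setP=> a; rewrite inE; apply/negP=> aA.
    apply: (emp 0 a) => //; apply/subsetP=> x _.
    by have [j] := cov x; rewrite expn0 ltnS leqn0 => /eqP ->.
  by case: m => // m _; rewrite A0 norm3_set0.
case: m => [|[|k]] //; rewrite !ltnS => hk.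
set z := [set x | [exists j : 'I_(2 ^ n), x \in V j]].
have -> : norm3_ge A k.+2 = [forall z, norm3_ge (restr A z) k.+1 || norm3_ge (restr A (~: z)) k.+1] by [].
rewrite negb_forall; apply/existsP; exists z; rewrite negb_or; apply/andP; split.
- apply: (IH _ (fun j => V j :|: ~: z) _ _ k.+1) => //.
  + move=> x; case xz: (x \in z).
      move: xz; rewrite inE => /existsP [j xj]; exists j => //; by rewrite inE xj.
    by exists 0; rewrite ?expn_gt0 // in_setU in_setC xz orbT.
  + move=> j a jn; rewrite /restr inE => /andP [aA az] aV.
    apply: (emp j a) => //; first by rewrite expnS mul2n -addnn ltn_addr.
    apply/subsetP=> x ax; have := subsetP aV x ax.
    by rewrite in_setU in_setC (subsetP az x ax) orbF.
- apply: (IH _ (fun j => V (j + 2 ^ n) :|: z) _ _ k.+1) => //.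
  + move=> x; case xz: (x \in z).
      by exists 0; rewrite ?expn_gt0 // in_setU xz orbT.
    have [j jn xj] := cov x.
    have hj : 2 ^ n <= j.
      rewrite leqNgt; apply/negP=> lt; move: xz; rewrite inE; move/negbT; rewrite negb_exists => /forallP /(_ (Ordinal lt)); by rewrite xj.
    exists (j - 2 ^ n).
      by rewrite ltn_subLR // addnn -mul2n -expnS.
    by rewrite subnK // in_setU xj.
  + move=> j a jn; rewrite /restr inE => /andP [aA az] aV.
    apply: (emp (j + 2 ^ n) a) => //; first by rewrite expnS mul2n -addnn ltn_add2r.
    apply/subsetP=> x ax; have := subsetP aV x ax.
    by move: (subsetP az x ax); rewrite in_setC in_setU => /negbTE ->; rewrite orbF.
Qed.

Theorem theorem5p10 (N n : nat) (A : {set {set 'I_N}}) :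
  A \subset Pset N -> can_be_split A (2 ^ n) -> norm3_le A n.
Proof.
move=> _ [V [_ [cov emp]]] m hm.
have h0 : 0 < 2 ^ n by rewrite expn_gt0.
pose i0 : 'I_(2 ^ n) := Ordinal h0.
rewrite leqNgt; apply/negP=> lt.
move: hm; apply/negP; apply: (@key N n A (fun j => V (insubd i0 j)) _ _ m lt).

  move=> x; have : x \in \bigcup_(j < 2 ^ n) V j by rewrite cov inE.
  case/bigcupP=> i _ xi; have e : insubd i0 (nat_of_ord i) = i := valKd i0 i; exists (val i) => //=; by rewrite e.
move=> j a jn aA aV.
have := emp (insubd i0 j); move/setP/(_ a); by rewrite /restr !inE aA aV.
Qed.
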